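(* Let $\Gamma$ be a finite connected regular graph with valency $k\ge 2$ and diameter $D\ge 3$. Then $\Gamma$ has an eigenvalue $\theta\neq k$ (of its adjacency matrix) satisfying $|\theta|>\sqrt{k/2}$.
   Context: Graphs are finite, undirected and simple; the eigenvalues of a graph are those of its adjacency matrix. *)

(* Defs.v *)
From HB Require Import structures.
From mathcomp Require Import all_boot all_order all_algebra.
From mathcomp Require Import reals.
Set Implicit Arguments. Unset Strict Implicit. Unset Printing Implicit Defensive.
Import Order.TTheory GRing.Theory Num.Theory.

Section Graph.
Variable n : nat.
Variable e : rel 'I_n.

Definition simple_graph : Prop := irreflexive e /\ symmetric e.

Definition walk_le (m : nat) (x y : 'I_n) : Prop :=
  exists p : seq 'I_n, [/\ path e x p, last x p = y & size p <= m].

Definition connected_graph : Prop := forall x y : 'I_n, connect e x y.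

Definition regular_graph (k : nat) : Prop :=
  forall x : 'I_n, #|[set y | e x y]| = k.

Definition has_diameter (D : nat) : Prop :=
  (forall x y : 'I_n, walk_le D x y) /\
  (exists x y : 'I_n, ~ walk_le D.-1 x y).

Definition adjmx (R : nzRingType) : 'M[R]_n := \matrix_(i, j) ((e i j)%:R)%R.
End Graph.

(* Main.v *)
Require Import Defs.
From HB Require Import structures.
From mathcomp Require Import all_boot all_order all_algebra.
From mathcomp Require Import reals.
From mathcomp Require Import complex.
Import Order.TTheory GRing.Theory Num.Theory Num.Def.
Local Open Scope ring_scope.

Lemma const_eig (R : realFieldType) n (e : rel 'I_n) k (w : 'I_n -> R) :
  symmetric e -> connected_graph e -> regular_graph e k ->
  (forall j, \sum_(l | e j l) w l = k%:R * w j) -> forall x y, w x = w y.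
Proof.
move=> esy econn ereg eq x y.
pose z0 := [arg max_(i > x) w i]%O.
have zmax : forall j, w j <= w z0.
  by rewrite /z0; case: Order.TotalTheory.arg_maxP => // i _ H j; apply: H.
have key : forall a b, e a b -> w a = w z0 -> w b = w z0.
  move=> a b eab wa.
  have h1 : \sum_(l | e a l) (w z0 - w l) = 0.
    rewrite sumrB eq wa.
    have -> : \sum_(l | e a l) w z0 = \sum_(l in [set l | e a l]) w z0.
      by apply: eq_bigl => l; rewrite inE.
    by rewrite sumr_const ereg mulr_natl subrr.
  have := psumr_eq0P _ h1.
  move=> /(_ _) H; apply/eqP; rewrite eq_sym -subr_eq0; apply/eqP.
  apply: H => //; first by move=> i _; rewrite subr_ge0.
have cl : closed e [pred j | w j == w z0].
  move=> a b eab; rewrite !inE; apply/eqP/eqP.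
    by apply: key.
  by apply: key; rewrite esy.
have H : forall j, w j = w z0.
  move=> j; have := closed_connect cl (econn z0 j); rewrite !inE eqxx.
  by move/esym/eqP.
by rewrite !H.
Qed.


Lemma sum_adj (C : nzRingType) n (e : rel 'I_n) k x :
  regular_graph e k -> \sum_l ((e x l)%:R : C) = k%:R.
Proof.
move=> ereg; rewrite -natr_sum; congr (_%:R).
rewrite -(ereg x) -sum1_card [RHS]big_mkcond /=.

by apply: eq_bigr => l _; rewrite inE; case: (e x l).
Qed.

Lemma graph_Q (C : numClosedFieldType) n (e : rel 'I_n) k x y :
  symmetric e -> regular_graph e k -> (forall l, ~~ (e x l && e y l)) ->
  let v : 'rV[C]_n := delta_mx 0 x - delta_mx 0 y in
  (v *m adjmx e C *m (adjmx e C *m (map_mx conjC v^T))) 0 0 = (2 * k)%:R.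
Proof.
move=> esy ereg nc v.
have vc : map_mx conjC v^T = v^T.
  by apply/matrixP => i j; rewrite !mxE rmorphB /= !conjC_nat.
have Asym : (adjmx e C)^T = adjmx e C.
  by apply/matrixP => i j; rewrite !mxE esy.
rewrite vc -{2}Asym -trmx_mul mxE.
have -> : \sum_j (v *m adjmx e C) 0 j * (v *m adjmx e C)^T j 0 =
          \sum_j ((e x j)%:R + (e y j)%:R).
  apply: eq_bigr => j _.
  rewrite /v mulmxBl -!rowE !mxE.
  have := nc j; case: (e x j); case: (e y j) => //= _.

  - by rewrite subr0 mulr1 addr0.
  - by rewrite sub0r mulrNN mulr1 add0r.
  - by rewrite subr0 mulr0 addr0.
by rewrite big_split /= !(@sum_adj C n e k _ ereg) -natrD mul2n -addnn.
Qed.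

Section Cx.
Local Open Scope complex_scope.

Lemma Re_sum (R : rcfType) (I : Type) (s : seq I) (P : pred I) (F : I -> R[i]) :
  complex.Re (\sum_(i <- s | P i) F i) = \sum_(i <- s | P i) complex.Re (F i).
Proof.
apply: (big_morph (@complex.Re R)) => // a b.
by case: a => ? ?; case: b.
Qed.

Lemma Im_sum (R : rcfType) (I : Type) (s : seq I) (P : pred I) (F : I -> R[i]) :
  complex.Im (\sum_(i <- s | P i) F i) = \sum_(i <- s | P i) complex.Im (F i).
Proof.
apply: (big_morph (@complex.Im R)) => // a b.
by case: a => ? ?; case: b.
Qed.

Lemma cplx_eig (R : rcfType) n (e : rel 'I_n) k (u : 'I_n -> R[i]) :
  symmetric e -> connected_graph e -> regular_graph e k ->
  (forall j, \sum_(l | e j l) u l = k%:R * u j) -> forall x y, u x = u y.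
Proof.
move=> esy econn ereg H x y.
have kE : (k%:R : R[i]) = (k%:R : R)%:C by rewrite rmorph_nat.
have h1 := @const_eig R n e k (fun j => complex.Re (u j)) esy econn ereg.
have h2 := @const_eig R n e k (fun j => complex.Im (u j)) esy econn ereg.
have e1 : complex.Re (u x) = complex.Re (u y).
  apply: h1 => j; rewrite -Re_sum H kE.
  by case: (u j) => a b /=; rewrite mul0r subr0.
have e2 : complex.Im (u x) = complex.Im (u y).
  apply: h2 => j; rewrite -Im_sum H kE.
  by case: (u j) => a b /=; rewrite mul0r addr0.
by move: e1 e2; case: (u x) => a b; case: (u y) => a' b' /= -> ->.
Qed.

End Cx.


Theorem lemma3p1 (R : realType) (n : nat) (e : rel 'I_n) (k D : nat) :
  simple_graph e -> connected_graph e -> regular_graph e k -> (2 <= k)%N ->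
  has_diameter e D -> (3 <= D)%N ->
  exists theta : R,
    [/\ eigenvalue (@adjmx n e R) theta, theta != k%:R &
        Num.sqrt (k%:R / 2) < `|theta| ].
Proof.
Local Open Scope sesquilinear_scope.
Local Open Scope complex_scope.
move=> [eirr esy] econn ereg k2 [_ [x [y nwalk]]] D3.
have nw2 : ~ walk_le e 2 x y.
  move=> [p [H1 H2 H3]]; apply: nwalk; exists p; split => //.
  by apply: leq_trans H3 _; case: D D3 => [|[|[|D]]].
have xy : x != y.
  by apply/eqP => xy; apply: nw2; exists [::]; split.
have nc : forall l, ~~ (e x l && e y l).
  move=> l; apply/negP => /andP[h1 h2]; apply: nw2; exists [:: l; y].
  by split => //=; rewrite h1 esy h2.

pose Ac := adjmx e R[i].
have AcE : Ac = map_mx (real_complex R) (adjmx e R).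
  by apply/matrixP => i j; rewrite !mxE rmorph_nat.
have Acsym : Ac^T = Ac by apply/matrixP => i j; rewrite !mxE esy.
have Acreal : Ac \is a realmx.
  by apply/mxOverP => i j; rewrite !mxE realn.
have Aherm : Ac \is hermsymmx.
  apply: realsym_hermsym => //; apply/is_hermitianmxP.
  by rewrite expr0 scale1r map_mx_id // Acsym.
pose P := spectralmx Ac; pose d := spectral_diag Ac.
have /orthomx_spectralP Aeq := hermitian_normalmx Aherm.
have Pu := spectral_unitarymx Ac.
have PPt : P *m P^t* = 1%:M by apply/unitarymxP.
have invP : invmx P = P^t* by apply: invmx_unitary.
have PtP : P^t* *m P = 1%:M by rewrite -invP mulVmx // spectral_unit.
have dreal := hermitian_spectral_diag_real Aherm.
pose r i : R := complex.Re (d 0 i).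
have dE : forall i, d 0 i = (r i)%:C.
  move=> i; have := mxOverP dreal 0 i; rewrite /r.
  by case: (d 0 i) => a b; rewrite complex_real => /eqP ->.
have PA : P *m Ac = diag_mx d *m P.
  by rewrite {1}Aeq !mulmxA mulmxV ?spectral_unit // mul1mx.
have roweig : forall i, row i P *m Ac = d 0 i *: row i P.
  by move=> i; rewrite -row_mul PA row_mul row_diag_mx -scalemxAl -rowE.
have rownz : forall i, row i P != 0.
  move=> i; apply/eqP => h; have := congr1 (fun M => M *m P^t*) h.
  rewrite /= mul0mx -row_mul PPt => /rowP/(_ i); rewrite !mxE eqxx /=.
  by move/eqP; rewrite oner_eq0.
have eigR : forall i, eigenvalue (adjmx e R) (r i).
  move=> i; have : eigenvalue Ac (d 0 i).
    by apply/eigenvalueP; exists (row i P).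
  rewrite dE !eigenvalue_root_char AcE -map_char_poly fmorph_root //.
pose v : 'rV[R[i]]_n := delta_mx 0 x - delta_mx 0 y.
pose c := v *m P^t*.
have cz : forall i, d 0 i = k%:R -> c 0 i = 0.
  move=> i dk; have ei := roweig i; rewrite dk in ei.
  have Pxy : P i x = P i y.
    apply: (@cplx_eig R n e k (fun j => P i j)) => // j.
    move/rowP: ei => /(_ j); rewrite !mxE => <-.
    rewrite big_mkcond /=; apply: eq_bigr => l _; rewrite !mxE esy.
    by case: (e l j); rewrite ?mulr1 ?mulr0.
  by rewrite /c /v mulmxBl -!rowE !mxE Pxy subrr.
case: (boolP [exists i, (r i != k%:R) && (Num.sqrt (k%:R / 2) < `|r i|)]).
  by move/existsP => [i /andP[h1 h2]]; exists (r i); split.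
rewrite negb_exists => /forallP hn; exfalso.
have k2E : (k%:R / 2 : R[i]) = (k%:R / 2 : R)%:C.
  by rewrite rmorphM rmorphV ?unitfE ?pnatr_eq0 // !rmorph_nat.
have hi : forall i, c 0 i * (c 0 i)^* * (d 0 i * d 0 i) <=
                    c 0 i * (c 0 i)^* * (k%:R / 2).
  move=> i; have := hn i; rewrite negb_and negbK.
  case/orP => [/eqP rk | hlt].
    by rewrite cz ?mul0r // dE rk rmorph_nat.
  apply: ler_wpM2l; first exact: mul_conjC_ge0.
  rewrite dE k2E -rmorphM lecR.
  have hle : `|r i| <= Num.sqrt (k%:R / 2) by rewrite leNgt.
  have := ler_pM (normr_ge0 _) (normr_ge0 _) hle hle.
  rewrite -normrM ger0_norm; last by rewrite -expr2 sqr_ge0.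
  rewrite -expr2 => h; apply: le_trans h _.
  by rewrite -expr2 sqr_sqrtr ?divr_ge0.
have ct : c^t* = P *m v^t* by rewrite /c trmx_mul map_mxM trmxCK.
have QE : v *m Ac *m (Ac *m v^t*) = c *m diag_mx d *m diag_mx d *m c^t*.
  rewrite ct /c {1 2}Aeq invP !mulmxA.
  by rewrite -(mulmxA _ P (P^t*)) PPt mulmx1.
have NE : v *m v^t* = c *m c^t*.
  by rewrite ct /c !mulmxA -(mulmxA _ (P^t*) P) PtP mulmx1.
have Q2 : (v *m Ac *m (Ac *m v^t*)) 0 0 = (2 * k)%:R :=
  @graph_Q _ n e k x y esy ereg nc.
rewrite QE in Q2.
have sd : forall z : 'I_n, \sum_j ((j == z)%:R : R[i]) = 1.
  move=> z; rewrite (bigD1 z) //= eqxx big1 ?addr0 // => j /negbTE ->.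
  by [].
have N2 : (v *m v^t*) 0 0 = 2.
  rewrite mxE (eq_bigr (fun j => (j == x)%:R + (j == y)%:R)); last first.
    move=> j _; rewrite !mxE /=.
    case: (eqVneq j x) => [jx|jx]; case: (eqVneq j y) => [jy|jy] //=.
    - by move: xy; rewrite -jx -jy eqxx.
    all: rewrite ?mulr1n ?mulr0n ?subr0 ?sub0r ?subrr ?rmorphN ?conjC1 ?conjC0.
    all: rewrite ?mulrNN ?mulr1 ?mulr0 ?addr0 ?add0r ?rmorph1 ?mul1r //.
  by rewrite /= big_split /= !sd.
rewrite NE in N2.
have Q2' : \sum_i c 0 i * (c 0 i)^* * (d 0 i * d 0 i) = (2 * k)%:R.
  rewrite -Q2 !mul_mx_diag !mxE; apply: eq_bigr => i _; rewrite !mxE.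
  rewrite -!mulrA; congr (_ * _).
  by rewrite [LHS]mulrC [RHS]mulrA.
have le : \sum_i c 0 i * (c 0 i)^* * (d 0 i * d 0 i) <= \sum_i c 0 i * (c 0 i)^* * (k%:R / 2).
  by apply: ler_sum => i _; apply: hi.
rewrite Q2' -mulr_suml in le.
rewrite mxE in N2.
have N2' : \sum_i c 0 i * (c 0 i)^* = 2.
  by rewrite -N2; apply: eq_bigr => i _; rewrite !mxE.
rewrite N2' mulrC divfK ?pnatr_eq0 // ler_nat mul2n -addnn in le.
move: le; rewrite -[X in (_ <= X)%N]addn0 leq_add2l leqn0 => /eqP k0.
by rewrite k0 in k2.
Qed.
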